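(* Let $f\in\mathbb Z[X]$ be a reciprocal Salem polynomial, and let $g\in\mathbb Z[X]$ have degree less than $\deg f$ and be such that $f+g$ is reciprocal. For $\epsilon\in\mathbb R$ set $f_\epsilon=f+\epsilon g\in\mathbb R[X]$. Let $k\in\mathbb N$ be such that $f_\epsilon$ has only simple roots for all $\epsilon\in[0,k]$. Then $f_k$ is a reciprocal Salem polynomial.
   Context: A polynomial $f=f_0+\dots+f_nX^n$ ($f_n\ne0$) is reciprocal if $f_i=f_{n-i}$ for all $i$. A Salem polynomial is a monic $f\in\mathbb Z[X]$ having exactly one root $\lambda$ with $|\lambda|>1$, this root being simple. *)

(* Defs.v *)
From mathcomp Require Import all_boot all_algebra all_reals realfun.
From mathcomp Require Import complex.
Set Implicit Arguments. Unset Strict Implicit. Unset Printing Implicit Defensive.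
Import GRing.Theory Num.Theory.
Local Open Scope ring_scope.

Definition reciprocal (T : nzRingType) (p : {poly T}) : Prop :=
  p != 0 /\ forall i : nat, (i <= (size p).-1)%N -> p`_i = p`_((size p).-1 - i).

Definition polyR (R : realType) (p : {poly int}) : {poly R} :=
  map_poly (fun z : int => z%:~R) p.
Definition polyRC (R : realType) (p : {poly R}) : {poly R[i]} :=
  map_poly (fun x : R => x%:C%C) p.

Definition Salem (R : realType) (f : {poly int}) : Prop :=
  f \is monic /\
  exists lambda : R[i],
    [/\ root (polyRC (polyR R f)) lambda, 1 < `|lambda|,
        mup lambda (polyRC (polyR R f)) = 1%N &
        forall z : R[i], root (polyRC (polyR R f)) z -> 1 < `|z| -> z = lambda].

Definition only_simple_roots (R : realType) (p : {poly R}) : Prop :=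
  forall z : R[i], root (polyRC p) z -> mup z (polyRC p) = 1%N.

Definition f_eps (R : realType) (f g : {poly int}) (eps : R) : {poly R} :=
  polyR R f + eps *: polyR R g.

(* Main.v *)
Require Import Defs.
From mathcomp Require Import all_boot all_algebra all_reals realfun.
From mathcomp Require Import complex.
From mathcomp Require Import ring lra order.
Import Order.TTheory GRing.Theory Num.Theory.
Local Open Scope ring_scope.
Local Open Scope complex_scope.

Section NC.
Context {R : realType}.
Local Notation C := R[i].

Definition nc (z : C) : R := Num.sqrt (complex.Re z ^+ 2 + complex.Im z ^+ 2).

Lemma normE (z : C) : `|z| = (nc z)%:C.
Proof. exact: normc_def. Qed.

Lemma nc_ge0 z : 0 <= nc z.
Proof. exact: sqrtr_ge0. Qed.

Lemma ncD x y : nc (x + y) <= nc x + nc y.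
Proof. by have := ler_normD x y; rewrite !normE -rmorphD lecR. Qed.

Lemma ncM x y : nc (x * y) = nc x * nc y.
Proof. by apply: complexI; rewrite -normE normrM !normE rmorphM. Qed.

Lemma ncV x : nc (x^-1) = (nc x)^-1.
Proof. by apply: complexI; rewrite -normE normfV normE fmorphV. Qed.

Lemma ncN x : nc (- x) = nc x.
Proof. by apply: complexI; rewrite -!normE normrN. Qed.

Lemma ncB x y : nc (x - y) = nc (y - x).
Proof. by rewrite -ncN opprB. Qed.

Lemma nc_eq0 x : (nc x == 0) = (x == 0).
Proof. by rewrite -[x == 0]normr_eq0 normE -(rmorph0 (real_complex R)) (inj_eq (@complexI R)). Qed.

Lemma nc1 : nc 1 = 1.
Proof. by apply: complexI; rewrite -normE normr1. Qed.

Lemma nc_conj x : nc (x^*) = nc x.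
Proof. by case: x => a b; rewrite /nc /= sqrrN. Qed.

Lemma mul_conj x : x * x^* = (nc x ^+ 2)%:C.
Proof.
case: x => a b; rewrite /nc /= sqr_sqrtr; last by rewrite addr_ge0 ?sqr_ge0.
by apply/eqP; rewrite eq_complex /= !expr2; apply/andP; split; apply/eqP; ring.
Qed.

Lemma nc_dist x y z : nc (x - z) <= nc (x - y) + nc (y - z).
Proof. by have := ncD (x - y) (y - z); rewrite addrA subrK. Qed.

Lemma nc_rev x y : nc x - nc y <= nc (x - y).
Proof. by have := ncD (x - y) y; rewrite subrK; lra. Qed.

End NC.
Section Fam.
Variable R : realType.
Local Notation C := R[i].
Variables f g : {poly int}.
Hypothesis hf : reciprocal f.
Hypothesis hfg : reciprocal (f + g).
Hypothesis hsz : (size g < size f)%N.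
Hypothesis hmon : f \is monic.

Local Notation n := (size f).-1.

Definition P (e : R) : {poly C} := polyRC (f_eps f g e).
Definition G : {poly C} := polyRC (polyR R g).

Lemma coefP e i : (P e)`_i = ((f`_i)%:~R + e * (g`_i)%:~R)%:C.
Proof.
rewrite /P /polyRC coef_map_id0 ?rmorph0 // /f_eps coefD coefZ /polyR.
by rewrite !coef_map_id0.
Qed.

Lemma coefG i : G`_i = ((g`_i)%:~R : R)%:C.
Proof. by rewrite /G /polyRC coef_map_id0 ?rmorph0 // /polyR coef_map_id0. Qed.

Lemma sizef : size f = n.+1.
Proof. by rewrite prednK // size_poly_gt0; case: hf. Qed.

Lemma symf i : (i <= n)%N -> f`_i = f`_(n - i).
Proof. by case: hf => _; apply. Qed.

Lemma symg i : (i <= n)%N -> g`_i = g`_(n - i).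
Proof.
move=> hi; have hs : size (f + g) = size f by rewrite size_polyDl.
have [_ h] := hfg; rewrite hs in h.
by have := h i hi; rewrite !coefD symf // => /addrI.
Qed.

Lemma gn : g`_n = 0.
Proof. by rewrite nth_default // -ltnS -sizef. Qed.

Lemma fn : f`_n = 1.
Proof. by have /monicP := hmon; rewrite lead_coefE. Qed.

Lemma sizeP e : size (P e) = size f.
Proof.
apply/eqP; rewrite eqn_leq; apply/andP; split.
  apply/leq_sizeP => j hj; rewrite coefP !nth_default ?mulr0 ?addr0 //.
  - exact: leq_trans (ltnW hsz) hj.
have hn : (P e)`_n != 0.
  rewrite coefP gn fn mulr0 addr0.
  by rewrite -(rmorph0 (real_complex R)) (inj_eq (@complexI R)) oner_eq0.
by rewrite sizef ltnNge; apply: contra hn => /leq_sizeP/(_ n (leqnn n)) ->.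
Qed.

Lemma leadP e : lead_coef (P e) = 1.
Proof.
by rewrite lead_coefE sizeP coefP gn fn mulr0 addr0 rmorph1.
Qed.

Lemma symP e i : (i <= n)%N -> (P e)`_i = (P e)`_(n - i).
Proof. by move=> hi; rewrite !coefP -symf // -symg. Qed.


Lemma horner_rev (F : fieldType) (p : {poly F}) m x : size p = m.+1 ->
  (forall i, (i <= m)%N -> p`_i = p`_(m - i)) -> x != 0 ->
  p.[x^-1] * x ^+ m = p.[x].
Proof.
move=> sp sym x0; rewrite !horner_coef sp mulr_suml.
rewrite [RHS](reindex_inj rev_ord_inj) /=.
apply: eq_bigr => i _; rewrite subSS.
have hi : (i <= m)%N by rewrite -ltnS.
rewrite (sym i hi) -mulrA; congr (_ * _).
rewrite [x ^+ m](_ : _ = x ^+ (m - i) * x ^+ i); last by rewrite -exprD subnK.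
by rewrite exprVn mulrCA mulVf ?expf_neq0 // mulr1.
Qed.

Lemma conjP e : map_poly conjc (P e) = P e.
Proof.
by apply/polyP => i; rewrite coef_map /= coefP conjc_real.
Qed.

Lemma reflP e w : root (P e) w -> w != 0 /\ root (P e) (w^*)^-1.
Proof.
move=> rw.
have h0 : (P e).[0] = 1.
  by rewrite horner_coef0 coefP (@symf 0 (leq0n _)) (@symg 0 (leq0n _)) subn0 fn gn mulr0 addr0 rmorph1.
have w0 : w != 0 by apply: contraTneq rw => ->; rewrite /root h0 oner_eq0.
split => //.
have wc0 : w^* != 0 by rewrite conjc_eq0.
have hc : (P e).[w^*] = 0.
  by rewrite -{1}(conjP e) horner_map /= (eqP rw) rmorph0.
have := @horner_rev _ (P e) n (w^*) (etrans (sizeP e) sizef) (@symP e) wc0.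
rewrite hc /root => /eqP; rewrite mulf_eq0 expf_eq0 (negbTE wc0) andbF orbF //.
Qed.


Lemma lbound_seq (T : eqType) (s : seq T) (F : T -> R) :
  (forall x, x \in s -> 0 < F x) -> exists r, 0 < r /\ forall x, x \in s -> r <= F x.
Proof.
elim: s => [|a s IH] H; first by exists 1; split.
have [r [r0 hr]] : exists r, 0 < r /\ forall x, x \in s -> r <= F x.
  by apply: IH => x hx; apply: H; rewrite in_cons hx orbT.
have Fa := H a (mem_head a s).
exists (Num.min r (F a)); split; first by rewrite lt_min r0 Fa.
move=> x; rewrite in_cons => /orP[/eqP ->|hx]; first by rewrite ge_min lexx orbT.
by rewrite ge_min hr.
Qed.

Lemma nc_prod (T : Type) (s : seq T) (F : T -> C) :
  nc (\prod_(x <- s) F x) = \prod_(x <- s) nc (F x).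
Proof.
elim: s => [|a s IH]; first by rewrite !big_nil nc1.
by rewrite !big_cons ncM IH.
Qed.

Lemma prod_const_seq (T : Type) (s : seq T) (a : R) :
  \prod_(x <- s) a = a ^+ size s.
Proof.
elim: s => [|b s IH]; first by rewrite big_nil expr0.
by rewrite big_cons IH exprS.
Qed.

Lemma nc_real (x : R) : nc x%:C = `|x|.
Proof. by rewrite /nc /= expr0n addr0 sqrtr_sqr. Qed.

Lemma sum_ge_term (T : eqType) (s : seq T) (F : T -> R) x :
  (forall y, 0 <= F y) -> x \in s -> F x <= \sum_(y <- s) F y.
Proof.
move=> F0 hx; rewrite (big_rem x hx) /= lerDl.
by apply: sumr_ge0.
Qed.

Lemma hornerPdiff e e0 z : (P e).[z] = (P e0).[z] + (e - e0)%:C * G.[z].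
Proof.
have -> : P e = P e0 + (e - e0)%:C *: G.
  apply/polyP => i; rewrite coefD coefZ !coefP coefG -rmorphM -rmorphD.
  by congr (_%:C); ring.
by rewrite hornerD hornerZ.
Qed.

Definition S e := exists l, root (P e) l /\ 1 < nc l /\
  forall z, root (P e) z -> 1 < nc z -> z = l.


Lemma local e0 : only_simple_roots (f_eps f g e0) ->
  exists d : R, 0 < d /\ forall e, `|e - e0| < d -> (S e <-> S e0).
Proof.
move=> simple.
have [zs Hp] := closed_field_poly_normal (P e0).
rewrite leadP scale1r in Hp.
have szs : size zs = n.
  by have := sizeP e0; rewrite Hp size_prod_XsubC sizef => -[].
have rootp z : root (P e0) z = (z \in zs) by rewrite Hp root_prod_XsubC.
have uzs : uniq zs.
  apply: count_mem_uniq => x; case: (boolP (x \in zs)) => hx.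
    have h1 : mup x (P e0) = 1%N by apply: simple; rewrite -/(P e0) rootp.
    by rewrite Hp mu_prod_XsubC in h1; rewrite h1.
  by apply/count_memPn.
pose F1 (zz : C * C) := if zz.1 == zz.2 then 1 else nc (zz.1 - zz.2) / 3.
have [r1 [r1p hr1]] : exists r, 0 < r /\ forall x, x \in [seq (z1, z2) | z1 <- zs, z2 <- zs] -> r <= F1 x.
  apply: lbound_seq => -[z1 z2] _; rewrite /F1 /=; case: eqP => [_|/eqP ne]; first exact: ltr01.
  by rewrite divr_gt0 // lt0r nc_eq0 subr_eq0 ne nc_ge0.
pose F2 (z : C) := if nc z == 1 then 1 else `|nc z - 1|.
have [r2 [r2p hr2]] : exists r, 0 < r /\ forall x, x \in zs -> r <= F2 x.
  apply: lbound_seq => z _; rewrite /F2; case: eqP => [_|/eqP ne]; first exact: ltr01.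
  by rewrite normr_gt0 subr_eq0.
pose r := Num.min (Num.min r1 r2) (1/2 : R).
have r0 : 0 < r by rewrite !lt_min r1p r2p /= divr_gt0.
have rr1 : r <= r1 by rewrite !ge_min lexx.
have rr2 : r <= r2 by rewrite !ge_min lexx orbT.
have rh : r <= 1/2 by rewrite !ge_min lexx orbT.
have hsep z1 z2 : z1 \in zs -> z2 \in zs -> z1 != z2 -> 3 * r <= nc (z1 - z2).
  move=> h1 h2 ne; have := hr1 _ (allpairs_f pair h1 h2); rewrite /F1 /= (negbTE ne).
  move=> h; have : r <= nc (z1 - z2) / 3 by exact: le_trans rr1 h.
  by rewrite ler_pdivlMr //; lra.
have hoff z : z \in zs -> nc z != 1 -> r <= `|nc z - 1|.
  move=> hz ne; have := hr2 _ hz; rewrite /F2 (negbTE ne) => h.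
  exact: le_trans rr2 h.
pose rho := r / 2.
pose M := 1 + \sum_(z <- zs) nc (G.[z]).
have M0 : 0 < M by rewrite /M ltr_pwDl // sumr_ge0 // => z _; exact: nc_ge0.
have rhon : 0 < rho ^+ n by rewrite exprn_gt0 // divr_gt0.
exists (rho ^+ n / M); split; first by rewrite divr_gt0.
move=> e he.
have [ws Hq] := closed_field_poly_normal (P e).
rewrite leadP scale1r in Hq.
have szws : size ws = n.
  by have := sizeP e; rewrite Hq size_prod_XsubC sizef => -[].
have rootq z : root (P e) z = (z \in ws) by rewrite Hq root_prod_XsubC.
have small z : z \in zs -> nc (P e).[z] < rho ^+ n.
  move=> hz; rewrite (hornerPdiff e e0).
  have /rootP -> : root (P e0) z by rewrite rootp.
  rewrite add0r ncM nc_real.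
  have hG : nc G.[z] <= M.
    have := @sum_ge_term _ zs (fun z => nc G.[z]) z (fun y => nc_ge0 _) hz.
    by rewrite /M; lra.
  apply: (le_lt_trans (ler_wpM2l (normr_ge0 _) hG)).
  by rewrite -ltr_pdivlMr.
have exist z : z \in zs -> has (fun w => nc (z - w) < rho) ws.
  move=> hz; apply/negPn/negP => /hasPn H.
  have : rho ^+ n <= nc (P e).[z].
    rewrite Hq horner_prod nc_prod -szws -prod_const_seq.
    rewrite big_seq [X in _ <= X]big_seq; apply: ler_prod => w hw.
    rewrite hornerXsubC; have := H w hw; rewrite -leNgt => ->.
    by rewrite andbT divr_ge0 // ltW.
  by have := small z hz; lra.
pose phi z := nth 0 ws (find (fun w => nc (z - w) < rho) ws).
have hphi z : z \in zs -> phi z \in ws /\ nc (z - phi z) < rho.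
  move=> hz; have hh := exist z hz; split.
    by rewrite /phi mem_nth // -has_find.
  exact: (nth_find 0 hh).
have inj : {in zs &, injective phi}.
  move=> z1 z2 h1 h2 e12; apply/eqP; apply: contraT => ne.
  have := hsep z1 z2 h1 h2 ne; have := nc_dist z1 (phi z1) z2.
  have [_ d1] := hphi z1 h1; have [_ d2] := hphi z2 h2.
  rewrite e12 in d1 *; rewrite (ncB (phi z2)); rewrite /rho in d1 d2; lra.
have himg w : w \in ws -> exists z, z \in zs /\ w = phi z.
  have sub : {subset [seq phi z | z <- zs] <= ws}.
    by move=> w' /mapP [z hz ->]; case: (hphi z hz).
  have u1 : uniq [seq phi z | z <- zs] by rewrite map_inj_in_uniq.
  have s1 : (size ws <= size [seq phi z | z <- zs])%N by rewrite size_map szs szws.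
  have [_ eqs] := uniq_min_size u1 sub s1.
  by move=> hw; move: hw; rewrite -eqs => /mapP [z hz ->]; exists z.
have hU w z : w \in ws -> z \in zs -> nc (w - z) < r -> w = phi z.
  move=> hw hz hd; have [z1 [hz1 ew]] := himg w hw.
  suff ez : z1 = z by rewrite ew ez.
  apply/eqP; apply: contraT => ne.
  have ne' : z != z1 by rewrite eq_sym.
  have := hsep z z1 hz hz1 ne'.
  have := nc_dist z (phi z1) z1; have [_ d1] := hphi z1 hz1.
  rewrite -ew in d1 *; rewrite (ncB w z) in hd; rewrite (ncB z1 w) in d1.
  rewrite /rho in d1; lra.
have hcirc z : z \in zs -> nc z = 1 -> nc (phi z) = 1.
  move=> hz hz1; have [hw hd] := hphi z hz.
  set w := phi z in hw hd *.
  have rw : root (P e) w by rewrite rootq.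
  have [w0 rv] := @reflP e w rw.
  have hv : (w^*)^-1 \in ws by rewrite -rootq.
  have ncw : 3/4 <= nc w.
    by have := nc_rev z w; rewrite hz1 /rho in hd *; lra.
  have z0 : z != 0 by rewrite -nc_eq0 hz1 oner_eq0.
  have zc0 : z^* != 0 by rewrite conjc_eq0.
  have wc0 : w^* != 0 by rewrite conjc_eq0.
  have zc : (z^*)^-1 = z.
    have h : z * z^* = 1 by rewrite mul_conj hz1 expr1n rmorph1.
    by rewrite -[LHS]mul1r -h mulfK.
  have key : nc ((w^*)^-1 - z) = nc (z - w) / nc w.
    have -> : (w^*)^-1 - z = (z - w)^* / (w^* * z^*).
      rewrite -{1}zc rmorphB /=; field.
      by rewrite wc0 zc0.
    by rewrite ncM ncV ncM !nc_conj hz1 mulr1.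
  have hlt : nc ((w^*)^-1 - z) < r.
    have wp : 0 < nc w by lra.
    rewrite key ltr_pdivrMr //.
    have : r * (3/4) <= r * nc w by rewrite ler_wpM2l // ltW.
    by rewrite /rho in hd; lra.
  have ew := hU _ _ hv hz hlt; rewrite -/w in ew.
  have h : w * w^* = 1 by rewrite -{1}ew mulVf.
  rewrite mul_conj -(rmorph1 (real_complex R)) in h.
  have h2 := complexI h.
  by have := nc_ge0 w; nra.
have hO z : z \in zs -> (1 < nc z) = (1 < nc (phi z)).
  move=> hz; have [hw hd] := hphi z hz.
  have t1 := nc_rev z (phi z); have t2 := nc_rev (phi z) z.
  rewrite ncB in t2.
  case: (nc z =P 1) => [h1|/eqP h1].
    by rewrite h1 (hcirc z hz h1) ltxx.
  have := hoff z hz h1; rewrite /rho in hd.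
  case: (ltrP 1 (nc z)) => h.
    by move=> hh; symmetry; lra.
  move=> hh; symmetry; apply/negbTE; rewrite -leNgt; lra.
split.
  move=> [l [hl [hl1 hlu]]].
  rewrite rootq in hl; have [z0 [hz0 el]] := himg l hl.
  exists z0; split; first by rewrite rootp.
  split; first by rewrite hO // -el.
  move=> z; rewrite rootp => hz hz1.
  apply: inj => //; rewrite -el; apply: hlu; first by rewrite rootq; case: (hphi z hz).
  by rewrite -hO.
move=> [l [hl [hl1 hlu]]].
rewrite rootp in hl.
exists (phi l); split; first by rewrite rootq; case: (hphi l hl).
split; first by rewrite -hO.
move=> u; rewrite rootq => hu hu1.
have [z [hz eu]] := himg u hu; rewrite eu in hu1 *.
have hz1 : 1 < nc z by rewrite (hO z hz).
by rewrite (hlu z) // rootp.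
Qed.


Lemma connectS (k : R) : 0 <= k ->
  (forall eps : R, 0 <= eps <= k -> only_simple_roots (f_eps f g eps)) ->
  S 0 -> S k.
Proof.
move=> k0 hsimple S0.
pose A : classical_sets.set R := fun t => (0 <= t <= k) /\ forall e, 0 <= e <= t -> S e.
have A0 : A 0.
  split; first by rewrite lexx k0.
  by move=> e /andP[h1 h2]; have -> : e = 0 by apply/eqP; rewrite eq_le h1 h2.
have hs : classical_sets.has_sup A.
  split; first by exists 0.
  by exists k => t [/andP[_ ?] _].
have s0 : 0 <= sup A by exact: sup_upper_bound hs 0 A0.
have sk : sup A <= k.
  by apply: ge_sup; [exists 0 | move=> t [/andP[_ ?] _]].
have hss : 0 <= sup A <= k by rewrite s0 sk.
have [d [d0 hd]] := @local (sup A) (hsimple _ hss).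
have [t At ht] := sup_adherent d0 hs.
have ts : t <= sup A by exact: sup_upper_bound hs t At.
have [/andP[t0 tk] St] := At.
have key e : 0 <= e -> e < sup A + d -> S e.
  move=> e0 ed; case: (lerP e t) => het.
    by apply: St; rewrite e0 het.
  have Sts : S (sup A) by apply/(hd t); [rewrite ltr_norml; apply/andP; split; lra | apply: St; rewrite t0 lexx].
  by apply/(hd e) => //; rewrite ltr_norml; apply/andP; split; lra.
case: (ltrP k (sup A + d)) => hk; first exact: key.
have Am : A (sup A + d / 2).
  split; first by apply/andP; split; lra.
  by move=> e /andP[e0 em]; apply: key => //; lra.
have := sup_upper_bound hs Am; lra.
Qed.

Lemma normC1 (z : C) : (1 < `|z|) = (1 < nc z).
Proof. by rewrite normE -(rmorph1 (real_complex R)) ltcR. Qed.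

Lemma P0 : P 0 = polyRC (polyR R f).
Proof.
apply/polyP => i; rewrite coefP mul0r addr0 /polyRC /polyR.
by rewrite !coef_map_id0 ?rmorph0.
Qed.

Lemma Pk (k : nat) : P k%:R = polyRC (polyR R (f + k%:R *: g)).
Proof.
apply/polyP => i; rewrite coefP /polyRC /polyR.
rewrite !coef_map_id0 ?rmorph0 // coefD coefZ intrD intrM.
by rewrite mulrz_nat.
Qed.

Lemma main_sec (k : nat) :
  (forall eps : R, 0 <= eps <= k%:R -> only_simple_roots (f_eps f g eps)) ->
  Salem R f -> reciprocal (f + k%:R *: g) /\ Salem R (f + k%:R *: g).
Proof.
move=> hsimple [_ [l [hl hl1 hmu hu]]].
have szh : size (f + k%:R *: g) = size f.
  by rewrite size_polyDl // (leq_ltn_trans (size_scale_leq _ _) hsz).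
split.
  split; first by rewrite -size_poly_gt0 szh sizef.
  move=> i; rewrite szh => hi.
  by rewrite !coefD !coefZ -symf // -symg.
have S0 : S 0.
  exists l; rewrite P0 -normC1; split => //; split => // z hz hz1.
  by apply: hu; rewrite ?normC1.
have k0 : (0 : R) <= k%:R by rewrite ler0n.
have [m [hm [hm1 hmu']]] := @connectS k%:R k0 hsimple S0.
split.
  by rewrite monicE lead_coefDl ?(monicP hmon) // (leq_ltn_trans (size_scale_leq _ _) hsz).
exists m; rewrite -Pk; split => //.
- by rewrite normC1.
- by apply: (hsimple k%:R); [rewrite lexx k0|].
- by move=> z hz hz1; apply: hmu'; rewrite // -normC1.
Qed.

End Fam.

Theorem lemma3 (R : realType) (f g : {poly int}) (k : nat) :
  reciprocal f -> Salem R f ->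
  (size g < size f)%N ->
  reciprocal (f + g) ->
  (forall eps : R, 0 <= eps <= k%:R -> only_simple_roots (f_eps f g eps)) ->
  reciprocal (f + k%:R *: g) /\ Salem R (f + k%:R *: g).
Proof.
move=> hf hS hsz hfg hsimple.
have hmon : f \is monic by case: hS.
exact: (@main_sec R f g hf hfg hsz hmon k hsimple hS).
Qed.
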